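(* Let $A=(A,\oplus,\odot)$ be a finite skew brace such that the derived subgroup $A_{\oplus}^{\prime}$ of its additive group $A_{\oplus}=(A,\oplus)$ is cyclic. Then the multiplicative group $A_{\odot}=(A,\odot)$ is solvable.
   Context: A skew brace is a set $A$ with two binary operations $\oplus,\odot$ such that $A_{\oplus}=(A,\oplus)$ and $A_{\odot}=(A,\odot)$ are groups and $a\odot(b\oplus c)=(a\odot b)\ominus a\oplus(a\odot c)$ for all $a,b,c\in A$, where $\ominus a$ denotes the inverse of $a$ in $A_{\oplus}$. *)

(* Defs.v *)
From mathcomp Require Import all_boot all_fingroup all_solvable.
Set Implicit Arguments. Unset Strict Implicit. Unset Printing Implicit Defensive.
Local Open Scope group_scope.

(* A finite skew brace (A, (+), (.)) is encoded by two finite groups on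
   isomorphic carriers: gT carries the additive group A_(+) (its group law
   "*" is (+), its inverse "^-1" is the additive inverse), hT carries the
   multiplicative group A_(.), and f : gT -> hT, finv : hT -> gT are mutually
   inverse bijections identifying the two carriers (the identity map of A). *)
Definition brace_mul (gT hT : finGroupType) (f : gT -> hT) (finv : hT -> gT)
  (a b : gT) : gT := finv (f a * f b).

Definition is_skew_brace (gT hT : finGroupType) (f : gT -> hT) (finv : hT -> gT) :
  Prop :=
  [/\ cancel f finv, cancel finv f &
      forall a b c : gT,
        brace_mul f finv a (b * c) =
        brace_mul f finv a b * a^-1 * brace_mul f finv a c].

(* Main.v *)
Require Import Defs.
From mathcomp Require Import all_boot all_fingroup all_solvable.
Set Implicit Arguments. Unset Strict Implicit. Unset Printing Implicit Defensive.
From mathcomp Require integral_char.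
Local Open Scope group_scope.

Lemma core_step (gT : finGroupType) (G H1 H2 A : {group gT}) (p : nat) :
  H1 \subset G -> H2 \subset G -> solvable H2 ->
  coprime #|G : H1| #|G : H2| ->
  A \subset H1 -> H1 \subset 'N(A) -> p.-group A -> A :!=: 1 ->
  p^'.-nat #|G : H2| ->
  exists M : {group gT}, [/\ M <| G, M :!=: 1 & solvable M].
Proof.
move=> sH1G sH2G solH2 co sAH1 nAH1 pA ntA p'H2.
have [P sylP] := Sylow_exists p H2.
have sylPG : p.-Sylow(G) P.
  have /and3P[sPH2 pP p'P] := sylP.
  apply/and3P; split => //; first exact: subset_trans sPH2 sH2G.
  by rewrite -(Lagrange_index sH2G sPH2) pnatM p'H2.
have [x Gx sAPx] := Sylow_subJ sylPG (subset_trans sAH1 sH1G) pA.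
pose K := (H2 :^ x)%G.
have sKG : K \subset G by rewrite /K /= -(conjGid Gx) conjSg.
have iK : #|G : K| = #|G : H2| by rewrite /K /= -{1}(conjGid Gx) indexJg.
have solK : solvable K by rewrite -(isog_sol (conj_isog H2 x)).
have GeKH : K * H1 = G.
  by apply: coprime_index_mulG => //; rewrite coprime_sym iK.
exists (gcore K G)%G; split.
- exact: gcore_normal.
- apply: contra ntA => /eqP M1; rewrite -subG1 -M1.
  apply/bigcapsP => y; rewrite -GeKH => /mulsgP[k h Kk Hh ->].
  rewrite conjsgM (conjGid Kk) -(normP (subsetP nAH1 h Hh)) conjSg.
  apply: subset_trans sAPx _; rewrite conjSg; exact: pHall_sub sylP.
- exact: solvableS (gcore_sub _ _) solK.
Qed.

Lemma wielandt n : forall (gT : finGroupType) (G H1 H2 H3 : {group gT}),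
  #|G| <= n -> H1 \subset G -> H2 \subset G -> H3 \subset G ->
  solvable H1 -> solvable H2 -> solvable H3 ->
  coprime #|G : H1| #|G : H2| -> coprime #|G : H1| #|G : H3| ->
  coprime #|G : H2| #|G : H3| -> solvable G.
Proof.
elim: n => [|n IH] gT G H1 H2 H3 leGn sH1G sH2G sH3G sol1 sol2 sol3 c12 c13 c23.
  by move: (cardG_gt0 G); rewrite leqn0 in leGn; rewrite (eqP leGn).
have [H1e|ntH1] := eqVneq H1 1%G.
  move: c12; rewrite H1e indexg1 => c12.
  have : #|G : H2| == 1%N.
    by rewrite -(eqP c12) (gcdn_idPr _) ?dvdn_indexg.
  by rewrite indexg_eq1 => sGH2; exact: solvableS sGH2 sol2.
have [A [sAH1 nsAH1 ntA /is_abelemP[p p_pr /abelem_pgroup pA]]] :=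
  solvable_norm_abelem sol1 (normal_refl H1) ntH1.
have nAH1 := normal_norm nsAH1.
have [M [nsMG ntM solM]] : exists M : {group gT}, [/\ M <| G, M :!=: 1 & solvable M].
  have [dv2|ndv2] := boolP (p %| #|G : H2|).
    apply: (@core_step _ G H1 H3 A p) => //.
    rewrite p'natE //; apply/negP => dv3.
    have : p %| gcdn #|G : H2| #|G : H3| by rewrite dvdn_gcd dv2 dv3.
    rewrite (eqP c23) dvdn1 => /eqP p1.
    by rewrite p1 in p_pr.
  by apply: (@core_step _ G H1 H2 A p) => //; rewrite p'natE.
rewrite (series_sol nsMG) solM /=.
have nMG := normal_norm nsMG.
have dq (H : {group gT}) : #|G / M : H / M| %| #|G : H|.
  by apply: index_quotient; apply: subset_trans (subsetIl _ _) nMG.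
apply: (IH _ _ (H1 / M)%G (H2 / M)%G (H3 / M)%G).
- by rewrite -ltnS (leq_trans _ leGn) // ltn_quotient // normal_sub.
- exact: quotientS.
- exact: quotientS.
- exact: quotientS.
- exact: quotient_sol.
- exact: quotient_sol.
- exact: quotient_sol.
- exact: coprime_dvdl (dq _) (coprime_dvdr (dq _) c12).
- exact: coprime_dvdl (dq _) (coprime_dvdr (dq _) c13).
- exact: coprime_dvdl (dq _) (coprime_dvdr (dq _) c23).
Qed.

Section Brace.
Variables (gT hT : finGroupType) (f : gT -> hT) (finv : hT -> gT).
Hypothesis sb : is_skew_brace f finv.

Let fK : cancel f finv. Proof. by case: sb. Qed.
Let fiK : cancel finv f. Proof. by case: sb. Qed.
Let bmD : forall a b c : gT,
        brace_mul f finv a (b * c) =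
        brace_mul f finv a b * a^-1 * brace_mul f finv a c.
Proof. by case: sb. Qed.

Local Notation bm := (brace_mul f finv).
Definition lam (a x : gT) := a^-1 * bm a x.

Lemma bm1r a : bm a 1 = a.
Proof.
have := bmD a 1 1; rewrite mulg1 => /(congr1 (fun y => (bm a 1)^-1 * y)).
by rewrite mulVg !mulgA mulVg mul1g => /(congr1 (fun y => a * y)); rewrite mulg1 mulKVg => <-.
Qed.

Lemma f1 : f 1 = 1.
Proof.
have := bm1r 1; rewrite /brace_mul => /(congr1 f); rewrite fiK.
by move/(congr1 (fun y => (f 1)^-1 * y)); rewrite mulKg mulVg.
Qed.

Lemma fbm a b : f (bm a b) = f a * f b.
Proof. by rewrite /brace_mul fiK. Qed.

Lemma bmE a b : bm a b = a * lam a b.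
Proof. by rewrite /lam mulKVg. Qed.

Lemma lamM a : {morph lam a : x y / x * y}.
Proof. by move=> x y; rewrite /lam bmD !mulgA. Qed.

Lemma lam_inj a : injective (lam a).
Proof.
move=> x y; rewrite /lam => /mulgI /(congr1 f); rewrite !fbm => /mulgI.
by move/(congr1 finv); rewrite !fK.
Qed.

Canonical lamm a := @Morphism _ _ [set: gT] (lam a) (in2W (lamM a)).

Definition bclosed (S : {set gT}) := {in S &, forall x y, bm x y \in S}.

Lemma lam_sub (S : {group gT}) a x : bclosed S -> a \in S -> x \in S -> lam a x \in S.
Proof. by move=> cS aS xS; rewrite /lam groupM ?groupV ?cS. Qed.

Lemma fgroup (S : {group gT}) : bclosed S -> group_set (f @: S).
Proof.
move=> cS; apply/group_setP; split; first by apply/imsetP; exists 1; rewrite ?f1.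
move=> _ _ /imsetP[x xS ->] /imsetP[y yS ->].
by apply/imsetP; exists (bm x y); rewrite ?fbm ?cS.
Qed.

Lemma card_f (S : {set gT}) : #|f @: S| = #|S|.
Proof. exact/card_imset/(can_inj fK). Qed.

Lemma char_closed (S H : {group gT}) : bclosed S -> H \char S -> bclosed H.
Proof.
move=> cS chH x y xH yH.
have sHS := char_sub chH.
have xS := subsetP sHS x xH.
pose g := restrm (subsetT S) (lamm x).
have injg : 'injm g.
  by apply/injmP => u v _ _; apply: lam_inj.
have gS : g @* S = S.
  apply/eqP; rewrite eqEcard; apply/andP; split.
    apply/subsetP => _ /morphimP[u _ uS ->]; exact: lam_sub.
  by rewrite card_injm.
have [_ /(_ g injg gS) gH] := charP _ _ chH.
rewrite bmE groupM // -gH; apply: mem_morphim => //; exact: subsetP sHS y yH.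
Qed.

Lemma nil_sol n : forall S : {group gT}, #|S| <= n -> bclosed S -> nilpotent S ->
  solvable (f @: S).
Proof.
elim: n => [|n IH] S leSn cS nilS.
  by move: (cardG_gt0 S); rewrite leqn0 in leSn; rewrite (eqP leSn).
pose FS := Group (fgroup cS).
have cardFS : #|FS| = #|S| := card_f S.
change (solvable FS).
have [le2|gt2] := leqP (size (primes #|S|)) 2.
  by apply: integral_char.Burnside_p_a_q_b; rewrite cardFS.
have Ht (t : nat) : t \in primes #|S| ->
    exists H : {group hT}, [/\ H \subset FS, solvable H & t.-nat #|FS : H|].
  move=> tS.
  pose T := pcore t^' S.
  have cT : bclosed T := char_closed cS (pcore_char _ _).
  have ltTS : #|T| < #|S|.
    rewrite ltn_neqAle subset_leq_card ?pcore_sub // andbT.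
    apply/negP => /eqP eTS; move: tS; rewrite mem_primes => /and3P[t_pr _ tdv].
    have : t^'.-nat #|S| by rewrite -eTS; exact: pcore_pgroup.
    by rewrite p'natE // tdv.
  exists (Group (fgroup cT)); split.
  - exact: imsetS (pcore_sub _ _).
  - apply: IH => //; first by rewrite -ltnS (leq_trans ltTS).
    exact: nilpotentS (pcore_sub _ _) nilS.
  - rewrite -divgS /= ?imsetS ?pcore_sub // !card_f divgS ?pcore_sub //.
    by have /and3P[_ _] := nilpotent_pcore_Hall t^' nilS; rewrite pnatNK.
case E: (primes #|S|) gt2 => [|p [|q [|r s]]] //= _.
have := sorted_primes #|S|; rewrite E /= => /andP[ltpq /andP[ltqr _]].
have /Ht[H1 [s1 sol1 n1]] : p \in primes #|S| by rewrite E inE eqxx.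
have /Ht[H2 [s2 sol2 n2]] : q \in primes #|S| by rewrite E !inE eqxx orbT.
have /Ht[H3 [s3 sol3 n3]] : r \in primes #|S| by rewrite E !inE eqxx !orbT.
have ltpr := ltn_trans ltpq ltqr.
apply: (wielandt (leqnn #|FS|) s1 s2 s3 sol1 sol2 sol3).
- apply: (sub_pnat_coprime _ n1 n2) => x; rewrite !inE => /eqP->; by rewrite gtn_eqF.
- apply: (sub_pnat_coprime _ n1 n3) => x; rewrite !inE => /eqP->; by rewrite gtn_eqF.
- apply: (sub_pnat_coprime _ n2 n3) => x; rewrite !inE => /eqP->; by rewrite gtn_eqF.
Qed.

Section Main.
Hypothesis cycC : cyclic ([set: gT]^`(1)).

Let C := ([set: gT]^`(1))%G.
Let Z := 'C(C)%G.

Lemma lamT b : lamm b @* [set: gT] = [set: gT].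
Proof.
have injl : 'injm (lamm b).
  by apply/injmP => x y _ _; exact: (@lam_inj b x y).
by apply/eqP; rewrite eqEcard subsetT card_injm ?subsetT ?leqnn.
Qed.

Lemma lamC b : lamm b @* C = C.
Proof. by rewrite /C morphim_der // lamT. Qed.

Lemma lam_pow b : exists k, forall u, u \in C -> lam b u = u ^+ k.
Proof.
have [g Cg0] := cyclicP cycC.
have Cg : (C : {set gT}) = <[g]> := Cg0.
have memC u : (u \in C) = (u \in <[g]>) by rewrite -Cg.
have gC : g \in C by rewrite memC cycle_id.
have : lam b g \in C.
  rewrite -(lamC b); exact: (mem_morphim (lamm b) (in_setT g) gC).
rewrite memC => /cycleP[k lg]; exists k => u; rewrite memC => /cycleP[m ->].
have := morphX (lamm b) m (in_setT g); rewrite /= => ->.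
by rewrite lg -!expgM mulnC.
Qed.

Lemma memJ_C c x : c \in C -> c ^ x \in C.
Proof. by move=> cC; rewrite conjg_mulR groupM //= derg1 mem_commg ?inE. Qed.

Lemma conj_lam b a c : c \in C -> c ^ lam b a = c ^ a.
Proof.
have [k Hk] := lam_pow b.
move=> cC; have : c \in lamm b @* C by rewrite lamC.
case/morphimP => c0 _ c0C ->.
have c0aC := memJ_C a c0C.
have := morphJ (lamm b) (in_setT c0) (in_setT a); rewrite /= => <-.
by rewrite !Hk // conjXg.
Qed.

Lemma lam_cosetZ a b : b^-1 * lam a b \in Z.
Proof.
apply/centP => c cC; apply/commute_sym/commgP/conjg_fixP.
by rewrite conjgM conj_lam ?memJ_C // conjgKV.
Qed.

Lemma Z_closed : bclosed Z.
Proof.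
move=> x y xZ yZ; rewrite bmE groupM //.
apply/centP => c; rewrite -(lamC x) => /morphimP[c0 _ c0C ->] /=.
by rewrite /commute -!lamM; congr (lam x _); apply: (centP yZ).
Qed.

Lemma Z_nil : nilpotent Z.
Proof.
have sCZ : C \subset Z by apply: cyclic_abelian.
apply: small_nil_class; apply: (@leq_trans 2) => //; rewrite nil_class2.
rewrite /center subsetI; apply/andP; split.
  exact: subset_trans (dergS 1 (subsetT Z)) sCZ.
apply: subset_trans (dergS 1 (subsetT Z)) _; rewrite centsC; exact: subxx.
Qed.

Lemma normZ x : x \in 'N(Z).
Proof.
by apply: (subsetP (norms_cent (normal_norm (der_normal 1 [set: gT]%G)))); rewrite inE.
Qed.

Lemma homM : {in [set: hT] &, {morph (fun u => coset Z (finv u)) : u v / u * v}}.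
Proof.
move=> u v _ _ /=.
have -> : finv (u * v) = bm (finv u) (finv v) by rewrite /brace_mul !fiK.
rewrite bmE -[lam _ (finv v)](mulKVg (finv v)) mulgA coset_kerr ?lam_cosetZ //.
by rewrite morphM ?normZ.
Qed.

Canonical Phi := @Morphism _ _ [set: hT] (fun u => coset Z (finv u)) homM.

Lemma derT_sub : [set: hT]^`(1) \subset f @: Z.
Proof.
have sCZ : C \subset Z by apply: cyclic_abelian.
have im1 : Phi @* ([set: hT]%G^`(1)) = 1.
  rewrite morphim_der //; apply/trivgP.
  have sIm : Phi @* [set: hT] \subset ([set: gT]%G / Z)%G.
    by apply/subsetP => _ /morphimP[w _ _ ->]; apply: mem_quotient; rewrite inE.
  apply: subset_trans (dergS 1 sIm) _.
  by rewrite (derG1P (sub_der1_abelian sCZ)).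
apply/subsetP => u uD.
have : Phi u = 1.
  have : Phi u \in Phi @* ([set: hT]%G^`(1)) by apply: mem_morphim; rewrite ?inE.
  by rewrite im1 => /set1gP.
move/(coset_idr (normZ _)) => fuZ.
by apply/imsetP; exists (finv u); rewrite ?fiK.
Qed.

Lemma main_sol : solvable [set: hT].
Proof.
rewrite (series_sol (der_normal 1 [set: hT]%G)); apply/andP; split.
  apply: (solvableS derT_sub (G := Group (fgroup Z_closed))).
  exact: (nil_sol (leqnn _) Z_closed Z_nil).
exact: abelian_sol (der_abelian 0 [set: hT]%G).
Qed.

End Main.

End Brace.

Theorem theorem5p2 (gT hT : finGroupType) (f : gT -> hT) (finv : hT -> gT) :
  is_skew_brace f finv ->
  cyclic ([set: gT]^`(1)) ->
  solvable [set: hT].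
Proof. by move=> sb cyc; exact: (main_sol sb cyc). Qed.
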